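(* For rooted trees $T_1$ and $T_2$, the quotient of the rooted tree $T_1+T_2$ satisfies $$q_{T_1+T_2}=\frac{q_{T_1}}{1-z\,q_{T_1}q_{T_2}}=\frac{z+1-z\,q_{T_2'}}{(z+1-z\,q_{T_1'})(z+1-z\,q_{T_2'})-z}.$$
   Context: For a tree $T$ on $n$ vertices with adjacency characteristic polynomial $\chi_T$, its reciprocal polynomial is $R_T(z)=z^{n/2}\chi_T(\sqrt z+1/\sqrt z)$. A rooted tree is a tree with a distinguished vertex $r$ (its root). For a rooted tree $T$, $T'$ denotes the rooted forest $T-\{r\}$, the root of each component being the vertex adjacent to $r$ in $T$. The quotient of a rooted tree $T$ is the rational function $q_T=\prod_iR_{T_i}(z)/R_T(z)$, where the $T_i$ are the trees of $T'$ (empty product $=1$); the quotient of a rooted forest is the sum of the quotients of its trees (so the quotient of the empty forest is $0$). For rooted trees $T_1,T_2$, the rooted tree $T_1+T_2$ is obtained by joining the roots of $T_1$ and $T_2$ by an edge, its root being the root of $T_1$. *)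

(* Defs.v *)
From HB Require Import structures.
From mathcomp Require Import all_boot all_order all_algebra.
Set Implicit Arguments. Unset Strict Implicit. Unset Printing Implicit Defensive.
Import Order.TTheory GRing.Theory Num.Theory.
Local Open Scope ring_scope.

(* Rooted trees: a root together with the (ordered) list of rooted subtrees
   hanging from it.  Children order is irrelevant for all notions below. *)
Inductive rtree : Type := Node of seq rtree.

Definition children (t : rtree) : seq rtree := let: Node ts := t in ts.

Fixpoint rtsize (t : rtree) : nat :=
  let: Node ts := t in (sumn (map rtsize ts)).+1.

(* edges of t, vertices labelled 0 .. rtsize t - 1 in preorder, root = 0 *)
Fixpoint tedges (t : rtree) : seq (nat * nat) :=
  let: Node ts := t in
  let fix go (off : nat) (cs : seq rtree) : seq (nat * nat) :=
      match cs with
      | [::] => [::]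
      | c :: cs' => (0%N, off) :: [seq ((p.1 + off)%N, (p.2 + off)%N) | p <- tedges c]
                     ++ go (off + rtsize c)%N cs'
      end in
  go 1%N ts.

Section Quot.
Variable R : numFieldType.

Definition adjmx (t : rtree) : 'M[R]_(rtsize t) :=
  \matrix_(i, j) ((((i : nat), (j : nat)) \in tedges t) || (((j : nat), (i : nat)) \in tedges t))%:R.

Definition chiT (t : rtree) : {poly R} := char_poly (adjmx t).

(* rational functions; we work in R(w) with w = sqrt z, so z = w^2 *)
Definition RF := {fraction {poly R}}.
Definition toRF (p : {poly R}) : RF := FracField.tofrac p.
Definition sqz : RF := toRF 'X.
Definition zvar : RF := sqz ^+ 2.

Definition recT (t : rtree) : RF :=
  sqz ^+ rtsize t * (map_poly (fun c : R => toRF c%:P) (chiT t)).[sqz + sqz^-1].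

Definition quotT (t : rtree) : RF :=
  (\prod_(c <- children t) recT c) / recT t.

Definition quotF (f : seq rtree) : RF := \sum_(c <- f) quotT c.

End Quot.

(* T1 + T2: join the roots by an edge, root of T1 is the root *)
Definition tjoin (t1 t2 : rtree) : rtree := Node (rcons (children t1) t2).

(* Main.v *)
Require Import Defs.
From HB Require Import structures.
From mathcomp Require Import all_boot all_order all_algebra.
From mathcomp Require Import ring perm zify.
Set Implicit Arguments. Unset Strict Implicit. Unset Printing Implicit Defensive.
Import Order.TTheory GRing.Theory Num.Theory.
Local Open Scope ring_scope.
Section Dlem.
Variable S : comNzRingType.
Definition D n (F : nat -> nat -> S) := \det (\matrix_(i < n, j < n) F i j).

Lemma D_ext n F G : (forall i j, (i < n)%N -> (j < n)%N -> F i j = G i j) -> D n F = D n G.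
Proof. by move=> h; rewrite /D; congr (\det _); apply/matrixP=> i j; rewrite !mxE h. Qed.

Lemma D_ublock n1 n2 F : (forall i j, (n1 <= i < n1 + n2)%N -> (j < n1)%N -> F i j = 0) ->
  D (n1 + n2) F = D n1 F * D n2 (fun i j => F (n1 + i)%N (n1 + j)%N).
Proof.
move=> h; rewrite /D -(det_ublock _ (\matrix_(i < n1, j < n2) F i (n1 + j)%N)); congr (\det _).
apply/matrixP=> i j; rewrite -[i]splitK -[j]splitK.
case: (split i) => i'; case: (split j) => j'.
- by rewrite block_mxEul !mxE.
- by rewrite block_mxEur !mxE.
- by rewrite block_mxEdl !mxE /= h // leq_addr ltn_add2l ltn_ord.
- by rewrite block_mxEdr !mxE.
Qed.

Lemma D_tr n F : D n F = D n (fun i j => F j i).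
Proof. by rewrite /D -det_tr; congr (\det _); apply/matrixP=> i j; rewrite !mxE. Qed.

Lemma D_lblock n1 n2 F : (forall i j, (i < n1)%N -> (n1 <= j < n1 + n2)%N -> F i j = 0) ->
  D (n1 + n2) F = D n1 F * D n2 (fun i j => F (n1 + i)%N (n1 + j)%N).
Proof.
move=> h; rewrite D_tr D_ublock; last by move=> i j hi hj; rewrite h.
by congr (_ * _); rewrite D_tr.
Qed.


Lemma D_row_lin n F G H i0 : (i0 < n)%N -> (forall j, F i0 j = G j + H j) ->
  D n F = D n (fun i j => if i == i0 then G j else F i j)
        + D n (fun i j => if i == i0 then H j else F i j).
Proof.
move=> hi h; rewrite /D.
rewrite (@determinant_multilinear _ _ _
   (\matrix_(i < n, j < n) (if (i : nat) == i0 then G j else F i j))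
   (\matrix_(i < n, j < n) (if (i : nat) == i0 then H j else F i j)) (Ordinal hi) 1 1).
- by rewrite !mul1r.
- by apply/rowP=> j; rewrite !mxE /= eqxx !mul1r h.
- by apply/matrixP=> i j; rewrite !mxE; have := neq_lift (Ordinal hi) i; rewrite -(inj_eq val_inj) /= eq_sym => /negbTE ->.
- by apply/matrixP=> i j; rewrite !mxE; have := neq_lift (Ordinal hi) i; rewrite -(inj_eq val_inj) /= eq_sym => /negbTE ->.
Qed.

Lemma D_zero_row n F i0 : (i0 < n)%N -> (forall j, (j < n)%N -> F i0 j = 0) -> D n F = 0.
Proof.
move=> hi h; rewrite /D.
set M := \matrix_(i < n, j < n) F i j.
rewrite (@determinant_multilinear _ _ M M M (Ordinal hi) 0 0) ?mul0r ?addr0 //.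
by apply/rowP=> j; rewrite !mxE /= h ?ltn_ord // !mul0r addr0.
Qed.

Definition swap k (j : nat) : nat := if j == 0%N then k else if j == k then 0%N else j.

Lemma D_swap n F k : (0 < k < n)%N -> D n (fun i j => F i (swap k j)) = - D n F.
Proof.
case/andP=> k0 kn.
have n0 : (0 < n)%N by apply: leq_trans kn.
rewrite /D.
have -> : \matrix_(i < n, j < n) F i (swap k j) =
   xcol (Ordinal n0) (Ordinal kn) (\matrix_(i < n, j < n) F i j).
  apply/matrixP=> i j; rewrite /xcol /col_perm !mxE /swap.
  case: tpermP => [->|->|/eqP h1 /eqP h2] //=.
    by rewrite eqxx; case: eqP => // k0'; rewrite k0' in k0.
  have -> : (val j == 0%N) = false by apply/negbTE; apply: contra h1 => /eqP h; apply/eqP/val_inj.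
  have -> : (val j == k) = false by apply/negbTE; apply: contra h2 => /eqP h; apply/eqP/val_inj.
  by [].
rewrite xcolE det_mulmx /tperm_mx det_perm odd_tperm.
have -> : (Ordinal n0 != Ordinal kn) by apply/eqP => /(congr1 val) /= h; rewrite -h in k0.
by rewrite expr1 mulrN1.
Qed.

Lemma D_swapc n F k : (0 < k < n)%N -> D n F = - D n (fun i j => F i (swap k j)).
Proof. by move=> h; rewrite D_swap // opprK. Qed.

Lemma D_col_lin n F G H j0 : (j0 < n)%N -> (forall i, F i j0 = G i + H i) ->
  D n F = D n (fun i j => if j == j0 then G i else F i j)
        + D n (fun i j => if j == j0 then H i else F i j).
Proof.
move=> hj h; rewrite D_tr (D_row_lin (G := G) (H := H) hj) //.
by congr (_ + _); rewrite D_tr.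
Qed.

Lemma D_zero_col n F j0 : (j0 < n)%N -> (forall i, (i < n)%N -> F i j0 = 0) -> D n F = 0.
Proof. by move=> hj h; rewrite D_tr (D_zero_row hj). Qed.

Lemma D1 F : D 1 F = F 0%N 0%N.
Proof. by rewrite /D det_mx11 mxE. Qed.

Lemma D0 F : D 0 F = 1.
Proof. by rewrite /D det_mx00. Qed.
End Dlem.
Section K.
Variable S : comNzRingType.

Lemma Kdet m1 m2 (F : nat -> nat -> S) :
 (forall i j, (i < m1.+1)%N -> (m1.+1 <= j < m1.+1 + m2.+1)%N ->
     F i j = - ((i == 0%N) && (j == m1.+1))%:R) ->
 (forall i j, (i < m1.+1)%N -> (m1.+1 <= j < m1.+1 + m2.+1)%N ->
     F j i = - ((i == 0%N) && (j == m1.+1))%:R) ->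
 D (m1.+1 + m2.+1) F = D m1.+1 F * D m2.+1 (fun i j => F (m1.+1 + i)%N (m1.+1 + j)%N)
   - D m1 (fun i j => F i.+1 j.+1) * D m2 (fun i j => F (m1.+1 + i.+1)%N (m1.+1 + j.+1)%N).
Proof.
set n1 := m1.+1; set n2 := m2.+1; set N := (n1 + n2)%N.
move=> hUR hDL.
have n1pos : (0 < n1)%N by [].
have NN : (0 < N)%N by rewrite addn_gt0.
pose G j := if (j < n1)%N then F 0%N j else 0.
pose H j := if (j < n1)%N then 0 else F 0%N j.
rewrite (D_row_lin (G := G) (H := H) NN); last by move=> j; rewrite /G /H; case: ifP => _; rewrite ?addr0 ?add0r.
set Fa := fun i j => _.
set Fb := fun i j => if i == 0%N then H j else F i j.
have HE : forall j, (j < N)%N -> H j = - (j == n1)%:R.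
  move=> j jN; rewrite /H; case: ifP => jn1.
    by rewrite (ltn_eqF jn1) oppr0.
  by rewrite hUR // jN andbT leqNgt jn1.
have Da : D N Fa = D n1 F * D n2 (fun i j => F (n1 + i)%N (n1 + j)%N).
  rewrite /N D_lblock; last first.
    move=> i j hi /andP [hj hjN]; rewrite /Fa /=; case: ifP => [_|/negbT i0].
      by rewrite /G ltnNge hj.
    rewrite hUR //; last by apply/andP. by rewrite (negbTE i0) /= oppr0.
  congr (_ * _); apply: D_ext => i j hi hj; rewrite /Fa.
    by rewrite /=; case: ifP => // /eqP ->; rewrite /G hj.
rewrite Da; congr (_ + _).
pose G2 i := if i == 0%N then Fb 0%N n1 else 0.
pose H2 i := if i == 0%N then 0 else Fb i n1.
have n1N : (n1 < N)%N by rewrite /N -addn1 leq_add2l.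
rewrite (D_col_lin (G := G2) (H := H2) n1N); last by move=> i; rewrite /G2 /H2; case: ifP => [/eqP ->|]; rewrite ?addr0 ?add0r.
set Fd := fun i j => if j == n1 then G2 i else Fb i j.
rewrite (@D_zero_row _ _ (fun i j => if j == n1 then H2 i else Fb i j) 0%N NN); last first.
  move=> j jN /=; case: ifP => [_|/negbT jn1]; first by [].
  by rewrite /Fb /= HE // (negbTE jn1) oppr0.
rewrite addr0.
have k01 : (0 < n1 < N)%N by rewrite n1pos n1N.
rewrite (D_swapc _ k01).
set Fe := fun i j => Fd i (swap n1 j).
have FeE : forall i j, Fe i j = Fd i (swap n1 j) by [].
have FeE1 : forall i, Fe i 0%N = if i == 0%N then -1 else 0.
  move=> i; rewrite FeE /swap eqxx /Fd eqxx /G2; case: ifP => // _.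
  by rewrite /Fb eqxx HE // eqxx.
have FeE2 : forall i j, j != 0%N -> j != n1 -> Fe i j = Fb i j.
  by move=> i j /negbTE j0 /negbTE jn; rewrite FeE /swap j0 jn /Fd jn.
have FeE3 : forall i, Fe i m1.+1 = Fb i 0%N.
  by move=> i; rewrite FeE /swap /= eqxx /Fd.
have FbE : forall i j, i != 0%N -> Fb i j = F i j.
  by move=> i j /negbTE i0; rewrite /Fb i0.
have NE : N = (1 + (m1 + n2))%N by rewrite /N /n1 addSn.
rewrite NE D_ublock; last first.
  move=> i j /andP [hi hiN]; rewrite ltnS leqn0 => /eqP ->.
  by rewrite FeE1; case: eqP => // i0; rewrite i0 in hi.
rewrite D1 FeE1 eqxx.
rewrite D_ublock; last first.
  move=> i j /andP [hi hiN] hj.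
  rewrite FeE2 ?FbE ?add1n //; last by rewrite /n1 eqSS neq_ltn hj.
  rewrite (hDL j.+1 i.+1) //; first by rewrite /= mulr0n oppr0.
  by move: hi hiN; rewrite /N /n1 /n2; lia.
have n2E : n2 = (1 + m2)%N by [].
rewrite [in D n2 _]n2E D_ublock; last first.
  move=> i j /andP [hi hiN]; rewrite ltnS leqn0 => /eqP ->.
  rewrite addn0 !add1n FeE3 FbE //.
  rewrite (hDL 0%N (m1 + i).+1) //; last by move: hi hiN; rewrite /N /n1 /n2; lia.
  have -> : ((m1 + i).+1 == n1) = false by apply/negbTE; rewrite /n1 eqSS; move: hi; lia.
  by rewrite /= mulr0n oppr0.
rewrite D1 addn0 add1n FeE3 FbE // (hDL 0%N m1.+1) //; last by rewrite /N /n1 /n2; lia.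
rewrite (_ : ((0%N == 0%N) && (m1.+1 == n1)) = true) //=.
have -> : D m1 (fun i j => Fe (1 + i)%N (1 + j)%N) = D m1 (fun i j => F i.+1 j.+1).
  apply: D_ext => i j hi hj; rewrite FeE2 ?FbE //.
  by rewrite /n1 add1n eqSS neq_ltn hj.
have -> : D m2 (fun i j => Fe (1 + (m1 + (1 + i)))%N (1 + (m1 + (1 + j)))%N)
   = D m2 (fun i j => F (n1 + i.+1)%N (n1 + j.+1)%N).
  apply: D_ext => i j hi hj.
  have e : forall x, (1 + (m1 + (1 + x)) = n1 + x.+1)%N by move=> x; rewrite /n1; lia.
  rewrite !e FeE2 ?FbE //; rewrite -?addnS; lia.
  ring.
exact: eqxx.
Qed.
End K.

Fixpoint gof (off : nat) (cs : seq rtree) : seq (nat * nat) :=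
  match cs with
  | [::] => [::]
  | c :: cs' => (0%N, off) :: [seq ((p.1 + off)%N, (p.2 + off)%N) | p <- tedges c]
                 ++ gof (off + rtsize c)%N cs'
  end.

Lemma tedgesE ts : tedges (Node ts) = gof 1 ts.
Proof.
rewrite /=; elim: ts 1%N => //= c cs IH off; by rewrite IH.
Qed.

Lemma gof_rcons off cs c : gof off (rcons cs c) =
  gof off cs ++ (0%N, (off + sumn (map rtsize cs))%N) ::
     [seq ((p.1 + (off + sumn (map rtsize cs)))%N, (p.2 + (off + sumn (map rtsize cs)))%N) | p <- tedges c].
Proof.
elim: cs off => [|c' cs IH] off /=; first by rewrite addn0 cats0.
by rewrite IH -catA /= !addnA.
Qed.

Lemma rtsize_rcons ts c : rtsize (Node (rcons ts c)) = (rtsize (Node ts) + rtsize c)%N.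
Proof. by rewrite /= -cats1 map_cat sumn_cat /= addn0 addSn. Qed.

Lemma rtsize_gt0 t : (0 < rtsize t)%N.
Proof. by case: t. Qed.

Fixpoint allT (P : rtree -> Prop) (ts : seq rtree) : Prop :=
  if ts is c :: cs then P c /\ allT P cs else True.

Definition rtree_ind' (P : rtree -> Prop) (H : forall ts, allT P ts -> P (Node ts)) : forall t, P t :=
  fix f t := let: Node ts := t in H ts
    ((fix g ts : allT P ts := match ts return allT P ts with
        | [::] => I | c :: cs => conj (f c) (g cs) end) ts).

Lemma allT_rcons P ts c : allT P (rcons ts c) -> allT P ts /\ P c.
Proof. by elim: ts => [|c' ts IH] /= [h1 h2] //; case: (IH h2). Qed.

Lemma mem_tedges_rcons ts c i j :
  ((i, j) \in tedges (Node (rcons ts c))) =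
  [|| (i, j) \in tedges (Node ts), (i == 0%N) && (j == rtsize (Node ts)) |
      [&& rtsize (Node ts) <= i, rtsize (Node ts) <= j &
          (i - rtsize (Node ts), j - rtsize (Node ts))%N \in tedges c]]%N.
Proof.
rewrite !tedgesE gof_rcons mem_cat inE.
have -> : (1 + sumn [seq rtsize i | i <- ts])%N = rtsize (Node ts) by [].
set n0 := rtsize (Node ts).
congr [|| _, _ | _].
apply/mapP/idP => [[[a b] hab [-> ->]] | /and3P [hi hj hm]] /=.
  by rewrite !leq_addl !addnK.
by exists (i - n0, j - n0)%N => //=; rewrite !subnK.
Qed.

Lemma tedges_bound t p : p \in tedges t -> (p.1 < rtsize t)%N && (p.2 < rtsize t)%N.
Proof.
move: p; elim/rtree_ind': t => ts.
elim/last_ind: ts => [|ts c IH] hall [i j]; first by rewrite tedgesE.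
case/allT_rcons: hall => hts hc.
rewrite mem_tedges_rcons rtsize_rcons.
have := rtsize_gt0 c; set n0 := rtsize (Node ts); set nc := rtsize c => nc0.
case/or3P => [/(IH hts) | /andP [/eqP -> /eqP ->] | /and3P [hi hj /hc]]; rewrite -/n0 -/nc /=.
- by case/andP => h1 h2; apply/andP; split; lia.
- lia.
- by case/andP => h1 h2; apply/andP; split; lia.
Qed.

Lemma notin1 t x y : (rtsize t <= x)%N -> ((x, y) \in tedges t) = false.
Proof. by move=> h; apply/negbTE/negP => /tedges_bound /andP [/= h1 _]; move: h h1; lia. Qed.
Lemma notin2 t x y : (rtsize t <= y)%N -> ((x, y) \in tedges t) = false.
Proof. by move=> h; apply/negbTE/negP => /tedges_bound /andP [_ /= h1]; move: h h1; lia. Qed.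

Definition E t i j := ((i, j) \in tedges t) || ((j, i) \in tedges t).

Lemma Esym t i j : E t i j = E t j i.
Proof. by rewrite /E orbC. Qed.

Section Ejoin.
Variables (ts : seq rtree) (c : rtree).
Let n0 := rtsize (Node ts).
Let t := Node (rcons ts c).

Lemma E_in0 i j : (i < n0)%N -> (j < n0)%N -> E t i j = E (Node ts) i j.
Proof.
move=> hi hj; rewrite /E /t !mem_tedges_rcons -/n0.
have -> : (i == 0%N) && (j == n0) = false by apply/negbTE/negP => /andP [_ /eqP e]; move: hj; rewrite e ltnn.
have -> : (j == 0%N) && (i == n0) = false by apply/negbTE/negP => /andP [_ /eqP e]; move: hi; rewrite e ltnn.
by rewrite (leqNgt n0 i) hi (leqNgt n0 j) hj /= !orbF.
Qed.

Lemma E_inc i j : E t (n0 + i)%N (n0 + j)%N = E c i j.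
Proof.
by rewrite /E /t !mem_tedges_rcons -/n0 !(notin1 (t := Node ts)) ?leq_addr // !addKn /=.
Qed.

Lemma E_cross i j : (i < n0)%N -> (n0 <= j)%N -> E t i j = (i == 0%N) && (j == n0).
Proof.
move=> hi hj; rewrite /E /t !mem_tedges_rcons -/n0 (notin2 (t := Node ts)) // (notin1 (t := Node ts)) //.
rewrite (leqNgt n0 i) hi /= !andbF !orbF.
have -> : (i == n0) = false by apply/negbTE/negP => /eqP e; move: hi; rewrite e ltnn.
by rewrite andbF orbF.
Qed.
End Ejoin.

Section Chi.
Variable R : numFieldType.

Definition B (t : rtree) (i j : nat) : {poly R} := 'X *+ (i == j) - ((E t i j)%:R)%:P.

Lemma chiTE t : chiT R t = D (rtsize t) (B t).
Proof.
by rewrite /chiT /char_poly /D; congr (\det _); apply/matrixP => i j; rewrite !mxE /B.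
Qed.

Definition chi' t := D (rtsize t).-1 (fun i j => B t i.+1 j.+1).

Lemma B_off t i j : i != j -> B t i j = - (E t i j)%:R.
Proof. by move/negbTE=> h; rewrite /B h mulr0n sub0r polyC_natr. Qed.

Lemma chi_join t1 t2 : chiT R (tjoin t1 t2) = chiT R t1 * chiT R t2 - chi' t1 * chi' t2.
Proof.
case: t1 => ts.
have -> : tjoin (Node ts) t2 = Node (rcons ts t2) by [].
rewrite !chiTE rtsize_rcons /chi'.
case E2 : t2 => [ts2]; rewrite -E2.
set m1 := sumn (map rtsize ts).
set m2 := sumn (map rtsize ts2).
have h1 : rtsize (Node ts) = m1.+1 by [].
have h2 : rtsize t2 = m2.+1 by rewrite E2.
rewrite h1 h2 Kdet /=.
- congr (_ * _ - _ * _); apply: D_ext => i j hi hj; rewrite /B.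
  + by rewrite E_in0.
  + by rewrite eqn_add2l (@E_inc ts t2 i j).
  + by rewrite (@E_in0 ts t2 i.+1 j.+1).
  + by rewrite eqn_add2l (@E_inc ts t2 i.+1 j.+1).
- move=> i j hi /andP [hj hjN]; rewrite B_off; last by apply/negP => /eqP e; move: hi hj; rewrite e; lia.
  by rewrite E_cross // h1.
- move=> i j hi /andP [hj hjN]; rewrite B_off; last by apply/negP => /eqP e; move: hi hj; rewrite e; lia.
  by rewrite Esym E_cross // h1.
Qed.

Lemma chi'_join t1 t2 : chi' (tjoin t1 t2) = chi' t1 * chiT R t2.
Proof.
case: t1 => ts.
have -> : tjoin (Node ts) t2 = Node (rcons ts t2) by [].
rewrite chiTE /chi' rtsize_rcons.
set m1 := sumn (map rtsize ts).
have h1 : rtsize (Node ts) = m1.+1 by [].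
rewrite h1 addSn /= D_lblock.
- congr (_ * _); apply: D_ext => i j hi hj; rewrite /B.
  + by rewrite (@E_in0 ts t2 i.+1 j.+1).
  + by rewrite -!addSn eqn_add2l (@E_inc ts t2 i j).
- move=> i j hi /andP [hj hjN]; rewrite B_off; last by apply/negP => /eqP e; move: hi hj; rewrite e; lia.
  by rewrite E_cross //= ?oppr0 //; lia.
Qed.

Lemma chi_leaf : chiT R (Node [::]) = 'X.
Proof. by rewrite chiTE D1 /B /E /= mulr1n subr0. Qed.

Lemma chi'_leaf : chi' (Node [::]) = 1.
Proof. by rewrite /chi' D0. Qed.
End Chi.

Section RFpart.
Variable R : numFieldType.
Local Notation RF := (RF R).
Local Notation w := (sqz R).
Local Notation z := (zvar R).
Let x : RF := w + w^-1.

Definition ev (p : {poly R}) : RF := (map_poly (fun c : R => toRF c%:P) p).[x].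

Lemma ev_morph : (fun c : R => toRF c%:P) = (@FracField.tofrac _ \o polyC).
Proof. by []. Qed.

Lemma evM p q : ev (p * q) = ev p * ev q.
Proof. by rewrite /ev ev_morph rmorphM hornerM. Qed.
Lemma evB p q : ev (p - q) = ev p - ev q.
Proof. by rewrite /ev ev_morph rmorphB hornerD hornerN. Qed.
Lemma ev1 : ev 1 = 1.
Proof. by rewrite /ev ev_morph rmorph1 hornerC. Qed.
Lemma evX : ev 'X = x.
Proof. by rewrite /ev ev_morph map_polyX hornerX. Qed.

Lemma w_neq0 : w != 0.
Proof. by rewrite /sqz /toRF tofrac_eq0 polyX_eq0. Qed.

Definition recT' (t : rtree) : RF := w ^+ (rtsize t).-1 * ev (chi' R t).

Lemma recTE t : recT R t = w ^+ rtsize t * ev (chiT R t).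
Proof. by []. Qed.

Lemma rtsize_join t1 t2 : rtsize (tjoin t1 t2) = (rtsize t1 + rtsize t2)%N.
Proof. by case: t1 => ts; rewrite /tjoin rtsize_rcons. Qed.

Lemma recT_join t1 t2 : recT R (tjoin t1 t2) = recT R t1 * recT R t2 - z * recT' t1 * recT' t2.
Proof.
rewrite !recTE /recT' chi_join evB !evM rtsize_join /zvar.
case: t1 => ts1; case: t2 => ts2 /=.
rewrite addSn exprS exprD !exprS expr0.
set a := w ^+ (sumn [seq rtsize i | i <- ts1]).
set b := w ^+ (sumn [seq rtsize i | i <- ts2]).
ring.
Qed.

Lemma recT'_join t1 t2 : recT' (tjoin t1 t2) = recT' t1 * recT R t2.
Proof.
rewrite recTE /recT' chi'_join evM rtsize_join.
case: t1 => ts1; case: t2 => ts2 /=.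
rewrite exprD !exprS.
set a := w ^+ (sumn [seq rtsize i | i <- ts1]).
set b := w ^+ (sumn [seq rtsize i | i <- ts2]).
ring.
Qed.

Lemma recT_leaf : recT R (Node [::]) = z + 1.
Proof.
by rewrite recTE chi_leaf evX /= expr1 /x mulrDr mulfV ?w_neq0 // /zvar expr2.
Qed.

Lemma recT'_leaf : recT' (Node [::]) = 1.
Proof. by rewrite /recT' chi'_leaf ev1 /= expr0 mulr1. Qed.

Lemma recT'_prod t : recT' t = \prod_(c <- children t) recT R c.
Proof.
case: t => ts /=; elim/last_ind: ts => [|ts c IH]; first by rewrite big_nil recT'_leaf.
have -> : Node (rcons ts c) = tjoin (Node ts) c by [].
by rewrite recT'_join IH big_rcons /= mulrC.
Qed.
End RFpart.

Section Final.
Variable R : numFieldType.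
Local Notation RF := (RF R).
Local Notation w := (sqz R).
Local Notation z := (zvar R).

Lemma z_toRF : z = toRF ('X ^+ 2).
Proof. by rewrite /zvar /sqz /toRF tofracXn. Qed.

Lemma recT_poly t :
  (exists Q : {poly R}, recT R t = toRF Q /\ Q.[0] = 1) /\
  (exists Q : {poly R}, recT' R t = toRF Q /\ Q.[0] = 1).
Proof.
elim/rtree_ind': t => ts.
elim/last_ind: ts => [|ts c IH] hall.
  split.
    exists ('X ^+ 2 + 1); rewrite recT_leaf z_toRF /toRF tofracD tofrac1; split => //.
    by rewrite !hornerE expr0n /= add0r.
  by exists 1; rewrite recT'_leaf /toRF tofrac1 hornerC.
case/allT_rcons: hall => hts [[Q1 [e1 v1]] [Q1' [e1' v1']]].
case: (IH hts) => [[Q0 [e0 v0]] [Q0' [e0' v0']]].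
have -> : Node (rcons ts c) = tjoin (Node ts) c by [].
split.
  exists (Q0 * Q1 - 'X ^+ 2 * Q0' * Q1'); rewrite recT_join e0 e1 e0' e1' z_toRF /toRF.
  split; first by rewrite tofracB !tofracM.
  by rewrite !hornerE v0 v1 v0' v1' expr0n /= !mul0r mulr1 subr0.
exists (Q0' * Q1); rewrite recT'_join e0' e1 /toRF.
split; first by rewrite tofracM.
by rewrite !hornerE v0' v1 mulr1.
Qed.

Lemma recT_neq0 t : recT R t != 0.
Proof.
case: (recT_poly t) => [[Q [-> v]] _].
rewrite /toRF tofrac_eq0; apply/eqP => Q0; move: v; rewrite Q0 horner0 => /eqP.
by rewrite eq_sym oner_eq0.
Qed.

Lemma quotTE t : quotT R t = recT' R t / recT R t.
Proof. by rewrite /quotT recT'_prod. Qed.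

Definition aT t : RF := z + 1 - z * quotF R (children t).

Lemma recT_a t : recT R t = recT' R t * aT t.
Proof.
case: t => ts; rewrite /aT /=.
elim/last_ind: ts => [|ts c IH].
  by rewrite recT_leaf recT'_leaf /quotF big_nil mulr0 subr0 mul1r.
have -> : Node (rcons ts c) = tjoin (Node ts) c by [].
rewrite recT_join recT'_join IH /quotF big_rcons /= -/(quotF R ts) quotTE.
have hc := recT_neq0 c.
move: (recT' R (Node ts)) (quotF R ts) (recT' R c) z hc; move: (recT R c) => Rc P0 q Pc zz hc.
have e : Pc = (Pc / Rc) * Rc by rewrite divfK.
rewrite [in LHS]e.
set u := Pc / Rc.
ring.
Qed.

End Final.

Lemma alg1 (F : fieldType) (R1 R2 P1 P2 z : F) : R1 != 0 -> R2 != 0 -> R1*R2 - z*P1*P2 != 0 ->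
  P1*R2/(R1*R2 - z*P1*P2) = (P1/R1)/(1 - z*(P1/R1)*(P2/R2)).
Proof.
move=> h1 h2 h3.
have e : 1 - z*(P1/R1)*(P2/R2) = (R1*R2 - z*P1*P2) / (R1 * R2) by field; apply/andP.
rewrite e; field; rewrite h3 h1 h2 //.
Qed.

Lemma alg2 (F : fieldType) (P1 P2 a1 a2 z : F) : P1 * a1 != 0 -> P2 * a2 != 0 ->
  (P1*a1)*(P2*a2) - z*P1*P2 != 0 -> P1*(P2*a2)/((P1*a1)*(P2*a2) - z*P1*P2) = a2/(a1*a2 - z).
Proof.
rewrite !mulf_eq0 !negb_or => /andP [h1 h1'] /andP [h2 h2'] h3.
have e : (P1*a1)*(P2*a2) - z*P1*P2 = (P1 * P2) * (a1 * a2 - z) by ring.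
have h4 : a1 * a2 - z != 0 by move: h3; rewrite e mulf_eq0 negb_or => /andP [].
rewrite e; field; rewrite h1 h2 h4 //.
Qed.


Unset Implicit Arguments.

Theorem lemma15 (R : numFieldType) (T1 T2 : rtree) :
  let z := zvar R in
  quotT R (tjoin T1 T2) = quotT R T1 / (1 - z * quotT R T1 * quotT R T2) /\
  quotT R (tjoin T1 T2) =
    (z + 1 - z * quotF R (children T2)) /
    ((z + 1 - z * quotF R (children T1)) * (z + 1 - z * quotF R (children T2)) - z).
Proof.
move=> z.
have h1 := recT_neq0 R T1.
have h2 := recT_neq0 R T2.
have hj := recT_neq0 R (tjoin T1 T2).
rewrite !quotTE recT'_join.
move: hj; rewrite recT_join => hj.
rewrite /z; split; first exact: (alg1 h1 h2 hj).
move: h1 h2 hj; rewrite (recT_a R T1) (recT_a R T2) => h1 h2 hj.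
exact: (alg2 h1 h2 hj).
Qed.
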